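(* Let $G$ be a topological group. Then $G$ is $\alpha_{1.5}$ if and only if $G$ is $\alpha_1$.
   Context: Convention: a ''sequence'' is a countably infinite set. A countably infinite set $A$ in a topological space $X$ converges to $x\in X$ if $x\notin A$ and every neighborhood of $x$ contains all but finitely many elements of $A$ (equivalently, some or every bijective enumeration of $A$ converges to $x$ with no term equal to $x$). A topological space $X$ is $\alpha_1$ (respectively $\alpha_{1.5}$) if for each $x\in X$ and all pairwise disjoint sequences $S_1,S_2,\dots\subseteq X$, each converging to $x$, there is a sequence $S\subseteq\bigcup_n S_n$ converging to $x$ such that $S_n\setminus S$ is finite for all $n$ (respectively, for infinitely many $n$). *)

(* Defs.v *)
From HB Require Import structures.
From mathcomp Require Import all_boot all_order.
From mathcomp Require Import all_classical topology.
Set Implicit Arguments. Unset Strict Implicit. Unset Printing Implicit Defensive.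
Local Open Scope classical_set_scope.

Definition is_topological_group (T : topologicalType)
  (mul : T -> T -> T) (inv : T -> T) (e : T) : Prop :=
  [/\ (forall x y z, mul x (mul y z) = mul (mul x y) z),
      (forall x, mul e x = x /\ mul x e = x),
      (forall x, mul (inv x) x = e /\ mul x (inv x) = e),
      continuous (fun p : T * T => mul p.1 p.2) &
      continuous inv].

Definition is_sequence (T : Type) (A : set T) : Prop :=
  countable A /\ infinite_set A.

Definition seq_converges (T : topologicalType) (A : set T) (x : T) : Prop :=
  is_sequence A /\ ~ A x /\ (forall U, nbhs x U -> finite_set (A `\` U)).

Definition pairwise_disjoint_fam (T : Type) (S : nat -> set T) : Prop :=
  forall m n, m <> n -> S m `&` S n = set0.

Definition alpha1 (T : topologicalType) : Prop :=
  forall (x : T) (S : nat -> set T),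
    (forall n, seq_converges (S n) x) -> pairwise_disjoint_fam S ->
    exists S0 : set T, S0 `<=` \bigcup_n S n /\ seq_converges S0 x /\
      (forall n, finite_set (S n `\` S0)).

Definition alpha1_5 (T : topologicalType) : Prop :=
  forall (x : T) (S : nat -> set T),
    (forall n, seq_converges (S n) x) -> pairwise_disjoint_fam S ->
    exists S0 : set T, S0 `<=` \bigcup_n S n /\ seq_converges S0 x /\
      infinite_set [set n | finite_set (S n `\` S0)].

(* Main.v *)
Require Import Defs.
From mathcomp Require Import all_boot all_order.
From mathcomp Require Import all_classical topology.
Set Implicit Arguments. Unset Strict Implicit. Unset Printing Implicit Defensive.
Local Open Scope classical_set_scope.
Lemma enum_set (T : Type) (A : set T) : countable A -> infinite_set A ->
  exists f : nat -> T, injective f /\ (forall n, A (f n)) /\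
    (forall y, A y -> exists n, f n = y).
Proof.
move=> cA iA.
have /card_esym/card_bijP[g [g' gK g'K]] := eq_card_nat cA iA.
pose s (n : nat) : [set: nat] := SigSub (mem_set (I : [set: nat] n)).
exists (fun n => val (g (s n))); split; [|split].
- move=> m n /val_inj /(can_inj gK) /(congr1 val) //.
- by move=> n; exact: set_valP.
- move=> y Ay; pose z : A := SigSub (mem_set Ay).
  exists (val (g' z)).
  have -> : s (val (g' z)) = g' z by apply: val_inj.
  by rewrite g'K.
Qed.

Lemma inj_infinite (T : Type) (g : nat -> T) : injective g -> infinite_set (g @` setT).
Proof.
move=> ig fin; apply: infinite_nat.
apply: (sub_finite_set _ (finite_preimage _ fin)).
- by move=> n _; exists n.
- by move=> a b _ _; apply: ig.
Qed.
Lemma choose_seq (T : Type) (Y : set T) (h : nat -> T -> T) (x : T) :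
  infinite_set Y -> (forall n, injective (h n)) ->
  exists b : nat -> T, (forall n, Y (b n)) /\ injective b /\
    injective (fun n => h n (b n)) /\ (forall n, h n (b n) <> x).
Proof.
move=> iY ih.
have ex : forall (ng : nat * (nat -> T)), exists y, Y y /\
    (forall j, (j < ng.1)%N -> y <> ng.2 j /\ h ng.1 y <> h j (ng.2 j)) /\
    h ng.1 y <> x.
  move=> [n g] /=.
  pose B := g @` `I_n `|` (h n @^-1` ((fun j => h j (g j)) @` `I_n))
            `|` h n @^-1` [set x].
  have fB : finite_set B.
    rewrite !finite_setU; split; [split|].
    - exact: finite_image.
    - by apply: finite_preimage; [move=> ? ? _ _; apply: ih | exact: finite_image].
    - by apply: finite_preimage; [move=> ? ? _ _; apply: ih | exact: finite_set1].
  have [y [Yy nBy]] := infinite_setN0 (infinite_setD iY fB).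
  exists y; split=> //; split.
  + move=> j jn; split=> E; apply: nBy.
    * by left; left; exists j => //; rewrite E.
    * by left; right; exists j => //.
  + by move=> E; apply: nBy; right.
have [step stepP] := choice ex.
pose st n g := step (n, g).
pose fix bs (n : nat) : nat -> T :=
  match n with
  | 0 => fun _ => x
  | n'.+1 => fun j => if (j < n')%N then bs n' j else st n' (bs n')
  end.
pose b n := st n (bs n).
have bsE : forall n j, (j < n)%N -> bs n j = b j.
  elim=> [//|n IH] j; rewrite ltnS leq_eqVlt => /orP[/eqP ->|jn] /=.
    by rewrite ltnn.
  by rewrite jn IH.
have P n : Y (b n) /\ (forall j, (j < n)%N -> b n <> b j /\ h n (b n) <> h j (b j))
    /\ h n (b n) <> x.
  have [Y1 [Y2 Y3]] := stepP (n, bs n).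
  split=> //; split=> // j jn.
  by have := Y2 j jn; rewrite /= bsE.
exists b; split; [by move=> n; case: (P n)|split; [|split]].
- move=> m n E; apply/eqP; case: ltngtP => // mn; exfalso.
    by case: (P n) => _ [/(_ m mn) [+ _] _]; apply.
  by case: (P m) => _ [/(_ n mn) [+ _] _]; apply.
- move=> m n /= E; apply/eqP; case: ltngtP => // mn; exfalso.
    by case: (P n) => _ [/(_ m mn) [_ +] _]; apply.
  by case: (P m) => _ [/(_ n mn) [_ +] _]; apply.
- by move=> n; case: (P n) => _ [].
Qed.
Lemma mul_nbhs (T : topologicalType) (mul : T -> T -> T) (a b : T) (U : set T) :
  continuous (fun p : T * T => mul p.1 p.2) -> nbhs (mul a b) U ->
  exists V1 V2, nbhs a V1 /\ nbhs b V2 /\ forall s t, V1 s -> V2 t -> U (mul s t).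
Proof.
move=> mc hU.
have := mc (a, b) U hU.
case=> [[V1 V2] /= [h1 h2] sub].
by exists V1, V2; split => //; split => // s t v1 v2; apply: (sub (s, t)).
Qed.


Lemma lcancel (T : topologicalType) (mul : T -> T -> T) (inv : T -> T) (e : T)
  (hG : is_topological_group mul inv e) u y1 y2 : mul u y1 = mul u y2 -> y1 = y2.
Proof.
case: hG => assoc unit invax _ _ E.
by rewrite -(unit y1).1 -(unit y2).1 -!(invax u).1 -!assoc E.
Qed.

Lemma grp1 (T : topologicalType) (mul : T -> T -> T) (inv : T -> T) (e : T)
  (hG : is_topological_group mul inv e) a x c : mul (mul (mul (mul a (inv x)) c) (inv c)) x = a.
Proof.
case: hG => assoc unit invax _ _.
by rewrite -(assoc _ c) (invax c).2 (unit _).2 -assoc (invax x).1 (unit a).2.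
Qed.

Lemma nb1 (T : topologicalType) (mul : T -> T -> T) (inv : T -> T) (e : T)
  (hG : is_topological_group mul inv e) x U : nbhs x U -> exists V1 V2, nbhs x V1 /\ nbhs x V2 /\
  forall a c, V1 a -> V2 c -> U (mul (mul a (inv x)) c).
Proof.
case: hG => assoc unit invax mulc invc hU.
have : nbhs (mul e x) U by rewrite (unit x).1.
case/(mul_nbhs mulc) => W1 [W2 [hW1 [hW2 sW]]].
have : nbhs (mul x (inv x)) W1 by rewrite (invax x).2.
case/(mul_nbhs mulc) => X1 [X2 [hX1 [hX2 sX]]].
exists X1, W2; split=> //; split=> // a c aX cW.
by apply: sW => //; apply: sX => //; apply: nbhs_singleton.
Qed.

Lemma nb2 (T : topologicalType) (mul : T -> T -> T) (inv : T -> T) (e : T)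
  (hG : is_topological_group mul inv e) x U : nbhs x U -> exists V1 V2, nbhs x V1 /\ nbhs x V2 /\
  forall t c, V1 t -> V2 c -> U (mul (mul t (inv c)) x).
Proof.
case: hG => assoc unit invax mulc invc hU.
have : nbhs (mul e x) U by rewrite (unit x).1.
case/(mul_nbhs mulc) => W1 [W2 [hW1 [hW2 sW]]].
have : nbhs (mul x (inv x)) W1 by rewrite (invax x).2.
case/(mul_nbhs mulc) => X1 [X2 [hX1 [hX2 sX]]].
exists X1, (inv @^-1` X2); split=> //; split.
  exact: invc.
move=> t c tX cX; apply: sW; first exact: sX.
exact: nbhs_singleton.
Qed.


Theorem theorem1p2 (T : topologicalType) (mul : T -> T -> T) (inv : T -> T)
  (e : T) :
  is_topological_group mul inv e -> (alpha1_5 T <-> alpha1 T).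
Proof.
move=> hG; split; last first.
  move=> H x S Sc Sd; have [S0 [h1 [h2 h3]]] := H x S Sc Sd.
  exists S0; split=> //; split=> //.
  by apply: (sub_infinite_set _ infinite_nat) => n _; exact: h3.
move=> H x S Sc Sd.
have hf : forall n, exists f : nat -> T, injective f /\ (forall k, S n (f k)) /\
    (forall y, S n y -> exists k, f k = y).
  by move=> n; apply: enum_set; [exact: (Sc n).1.1 | exact: (Sc n).1.2].
have [f fP] := choice hf.
pose a' (c : nat) : T :=
  if (unpickle c : option (nat * (nat * nat))) is Some t then f t.2.1 t.2.2 else x.
pose h (c : nat) (y : T) := mul (mul (a' c) (inv x)) y.
have hinj : forall c, injective (h c) by move=> c y1 y2; rewrite /h; exact: (lcancel hG).
have [b' [b'S [b'inj [pinj' px']]]] :=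
  choose_seq x (Sc 0).1.2 hinj.
pose b (t : nat * (nat * nat)) := b' (pickle t).
pose p (t : nat * (nat * nat)) := h (pickle t) (b t).
have pE : forall i m k, p (i,(m,k)) = mul (mul (f m k) (inv x)) (b (i,(m,k))).
  by move=> i m k; rewrite /p /h /a' pickleK.
have binj : injective b by move=> t1 t2 /b'inj /(pcan_inj pickleK).
have pinj : injective p by move=> t1 t2 /pinj' /(pcan_inj pickleK).
pose P i := [set y | exists m k, (m <= i)%N /\ p (i,(m,k)) = y].
have Pc : forall i, seq_converges (P i) x.
  move=> i; split; [split|split].
  - apply: (sub_countable _ (countableP [set: nat * (nat * nat)])).
    apply: (card_le_trans _ (card_image_le p setT)).
    by apply: subset_card_le => y [m [k [_ <-]]]; exists (i,(m,k)).
  - apply: (sub_infinite_set _ (@inj_infinite _ (fun k => p (i,(0,k))) _)).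
      by move=> y [k _ <-]; exists 0%N, k.
    by move=> k1 k2 /pinj [].
  - by move=> [m [k [_ E]]]; apply: (px' (pickle (i,(m,k)))); exact: E.
  - move=> U hU.
    have [V1 [V2 [hV1 [hV2 sV]]]] := nb1 hG hU.
    pose Q1 := \bigcup_(m in `I_i.+1)
       ((fun k => (i,(m,k))) @` (f m @^-1` (S m `\` V1))).
    pose Q2 := b @^-1` (S 0 `\` V2).
    apply: (sub_finite_set (B := p @` (Q1 `|` Q2))); last first.
      apply: finite_image; rewrite finite_setU; split.
        apply: bigcup_finite => // m _; apply: finite_image.
        apply: finite_preimage; last exact: (Sc m).2.2.
        by move=> ? ? _ _; apply: (fP m).1.
      apply: finite_preimage; last exact: (Sc 0).2.2.
      by move=> ? ? _ _; apply: binj.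
    move=> y [[m [k [mi <-]]] nU]; exists (i,(m,k)) => //.
    have [v1|nv1] := pselect (V1 (f m k)); last first.
      by left; exists m; [rewrite /= ltnS | exists k => //; split => //; exact: (fP m).2.1].
    have [v2|nv2] := pselect (V2 (b (i,(m,k)))); last first.
      by right; split => //; apply: b'S.
    by exfalso; apply: nU; rewrite pE; apply: sV.
have Pd : pairwise_disjoint_fam P.
  move=> i j ij; apply/seteqP; split => // y [[m [k [_ <-]]] [m' [k' [_ /pinj E]]]].
  by case: E => E; rewrite E in ij.
have [C [CP [Cc CI]]] := H x P Pc Pd.
have hiof : forall m, exists i, finite_set (P i `\` C) /\ (m <= i)%N.
  move=> m; apply: contrapT => nex; apply: CI.
  apply: (sub_finite_set _ (finite_II m)) => n In /=.
  by rewrite ltnNge; apply/negP => mn; apply: nex; exists n.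
have [iof iofP] := choice hiof.
pose Sst := [set y | exists m k, f m k = y /\ C (p (iof m, (m,k)))].
have fin : forall m, finite_set (S m `\` Sst).
  move=> m.
  apply: (sub_finite_set (B := f m @` ((fun k => p (iof m,(m,k))) @^-1`
     (P (iof m) `\` C)))); last first.
    apply: finite_image; apply: finite_preimage; last exact: (iofP m).1.
    by move=> k1 k2 _ _ /pinj [].
  move=> y [Smy nSy]; have [k E] := (fP m).2.2 y Smy.
  exists k => //; split.
    by exists m, k; split => //; exact: (iofP m).2.
  by move=> Cp; apply: nSy; exists m, k.
exists Sst; split; [|split; [split; [split|split]|]].
- by move=> y [m [k [<- _]]]; exists m => //; exact: (fP m).2.1.
- apply: (sub_countable _ (countableP [set: nat * nat])).
  apply: (card_le_trans _ (card_image_le (fun mk => f mk.1 mk.2) setT)).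
  by apply: subset_card_le => y [m [k [<- _]]]; exists (m,k).
- move=> finS; apply: (Sc 0).1.2.
  apply: (sub_finite_set (B := (S 0 `\` Sst) `|` Sst)).
    by move=> y S0y; have [?|?] := pselect (Sst y); [right|left].
  by rewrite finite_setU; split => //; exact: fin.
- by move=> [m [k [E _]]]; apply: (Sc m).2.1; rewrite -E; exact: (fP m).2.1.
- move=> U hU.
  have [V1 [V2 [hV1 [hV2 sV]]]] := nb2 hG hU.
  pose E1 := (fun mk : nat * nat => b (iof mk.1, mk)) @^-1` (S 0 `\` V2).
  pose E2 := (fun mk : nat * nat => p (iof mk.1, mk)) @^-1` (C `\` V1).
  apply: (sub_finite_set (B := (fun mk => f mk.1 mk.2) @` (E1 `|` E2))); last first.
    apply: finite_image; rewrite finite_setU; split.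
      apply: finite_preimage; last exact: (Sc 0).2.2.
      by move=> [m1 k1] [m2 k2] _ _ /binj [] _ -> ->.
    apply: finite_preimage; last exact: Cc.2.2.
    by move=> [m1 k1] [m2 k2] _ _ /pinj [] _ -> ->.
  move=> y [[m [k [<- Cp]]] nU]; exists (m,k) => //.
  have [v1|nv1] := pselect (V1 (p (iof m,(m,k)))); last by right.
  have [v2|nv2] := pselect (V2 (b (iof m,(m,k)))); last first.
    by left; split => //; apply: b'S.
  exfalso; apply: nU.
  have := sV _ _ v1 v2; rewrite pE.
  by rewrite (grp1 hG).
- exact: fin.
Qed.
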